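(* Let $P$ be a finite, nonempty, ranked poset of width at most $3$. If $P$ is minimal automorphic, then $P$ is (isomorphic to) a 6-tower. Conversely, every 6-tower is automorphic.
   Context: All posets are finite. For a poset $P$ and $p\in P$, the rank $r(p)$ of $p$ is the largest $m$ such that there is a chain $p_0<p_1<\dots<p_m=p$ in $P$. The poset $P$ is ranked of rank $r(P)$ if every maximal chain of $P$ has exactly $r(P)+1$ elements. For integers $0\le i\le j$, $P(i,j)=\{p\in P: i\le r(p)\le j\}$ and $P(i)=P(i,i)$, each with the induced order. The width of $P$ is the size of its largest antichain. A subset $Q\subseteq P$ (with induced order) is a retract of $P$ if there is an order-preserving map $f:P\to Q$ with $f(q)=q$ for all $q\in Q$. The ordinal sum of posets $P_1,\dots,P_k$ ($k\ge 1$) is their disjoint union, ordered by the orders of the $P_i$ together with $p<q$ whenever $p\in P_i$, $q\in P_j$, $i<j$. The 6-crown $C_6$ is the poset on $\{x_0,x_1,x_2,y_0,y_1,y_2\}$ whose only strict comparabilities are $x_0<y_0>x_1<y_1>x_2<y_2>x_0$. A 6-stack is a ranked poset $P$ of rank $n\ge 1$ such that for each $0\le i<n$, $P(i,i+1)$ is isomorphic to $C_6$. A 6-tower is an ordinal sum of one or more posets each of which is either a two-element antichain or a 6-stack. A poset is automorphic if it has an automorphism with no fixed point; it is minimal automorphic if it is automorphic and no proper retract of it is automorphic. *)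

(* Defs.v *)
(* Finite posets are [finPOrderType d]; induced subposets are
   represented by subsets [S : {set P}] carrying the order of P. *)
From HB Require Import structures.
From mathcomp Require Import all_boot all_order.
Set Implicit Arguments. Unset Strict Implicit. Unset Printing Implicit Defensive.
Import Order.TTheory.
Local Open Scope order_scope.

Section PosetDefs.
Context {d : Order.disp_t} {P : finPOrderType d}.

Definition chainIn (S C : {set P}) : bool :=
  (C \subset S) && [forall x in C, forall y in C, x >=< y].

Definition maxchainIn (S C : {set P}) : bool :=
  chainIn S C && [forall D : {set P}, (chainIn S D && (C \subset D)) ==> (D == C)].

Definition rankIn (S : {set P}) (p : P) : nat :=
  (\max_(C : {set P} | chainIn S C && (p \in C) && [forall x in C, (x <= p)%O]) #|C|.-1)%N.

Definition rankedIn (S : {set P}) (n : nat) : Prop :=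
  forall C : {set P}, maxchainIn S C -> #|C| = n.+1.

Definition levelIn (S : {set P}) (i j : nat) : {set P} :=
  [set p in S | i <= rankIn S p <= j]%N.

Definition antichain (A : {set P}) : Prop :=
  forall x y, x \in A -> y \in A -> x != y -> ~~ (x >=< y).

Definition width_le (w : nat) : Prop :=
  forall A : {set P}, antichain A -> (#|A| <= w)%N.

(* The 6-crown on 'I_6: 0,1,2 = x0,x1,x2 and 3,4,5 = y0,y1,y2; strict
   comparabilities x0<y0>x1<y1>x2<y2>x0. *)
Definition crown6_lt (a b : 'I_6) : bool :=
  ((a : nat), (b : nat)) \in [:: (0,3); (1,3); (1,4); (2,4); (2,5); (0,5)]%N.

Definition iso_C6 (Q : {set P}) : Prop :=
  exists f : 'I_6 -> P,
    [/\ injective f, f @: [set: 'I_6] = Q &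
        (forall a b, (f a < f b) = crown6_lt a b)].

Definition stack6In (S : {set P}) : Prop :=
  exists n : nat, [/\ (1 <= n)%N, rankedIn S n &
    (forall i : nat, (i < n)%N -> iso_C6 (levelIn S i i.+1))].

Definition antichain2 (S : {set P}) : Prop := #|S| = 2%N /\ antichain S.

(* P is (isomorphic to) a 6-tower: P splits into k >= 1 blocks, ordered as an
   ordinal sum, each block being a two-element antichain or a 6-stack *)
Definition tower6 : Prop :=
  exists k : nat, (0 < k)%N /\
  exists blk : P -> 'I_k,
    (forall x y : P, (blk x < blk y)%N -> x < y) /\
    (forall i : 'I_k, antichain2 [set x | blk x == i] \/
                      stack6In [set x | blk x == i]).

Definition retract (Q : {set P}) : Prop :=
  exists f : P -> P,
    [/\ forall x, f x \in Q,
        (forall x y, x <= y -> f x <= f y) &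
        {in Q, forall q, f q = q}].

Definition automorphicIn (Q : {set P}) : Prop :=
  exists g h : P -> P,
    [/\ {in Q, forall x, g x \in Q} /\ {in Q, forall x, h x \in Q},
        {in Q, cancel g h} /\ {in Q, cancel h g},
        ({in Q &, forall x y, x <= y -> g x <= g y}),
        ({in Q &, forall x y, x <= y -> h x <= h y}) &
        {in Q, forall x, g x != x}].

Definition automorphic : Prop := automorphicIn [set: P].

Definition minimal_automorphic : Prop :=
  automorphic /\
  forall Q : {set P}, retract Q -> Q \proper [set: P] -> ~ automorphicIn Q.

End PosetDefs.

Arguments width_le {d} P w.
Arguments tower6 {d} P.
Arguments automorphic {d} P.
Arguments minimal_automorphic {d} P.

(* Main.v *)
Require Import Defs.
From HB Require Import structures.
From mathcomp Require Import all_boot all_order.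
From mathcomp Require Import zify.
Set Implicit Arguments. Unset Strict Implicit. Unset Printing Implicit Defensive.
Import Order.TTheory.

Module MA.
Local Open Scope order_scope.


Section Rank.
Context {d : Order.disp_t} {P : finPOrderType d}.
Implicit Types (S C D M : {set P}) (p q x y z : P).

Lemma chain_sub S C : chainIn S C -> C \subset S.
Proof. by case/andP. Qed.

Lemma chain_cmp S C x y : chainIn S C -> x \in C -> y \in C -> x >=< y.
Proof. by case/andP=> _ /forallP H xC yC; move: (H x); rewrite xC /= => /forallP/(_ y); rewrite yC. Qed.

Lemma chainP S C : C \subset S -> (forall x y, x \in C -> y \in C -> x >=< y) -> chainIn S C.
Proof.
move=> sub H; rewrite /chainIn sub /=; apply/forallP=> x; apply/implyP=> xC.
by apply/forallP=> y; apply/implyP=> yC; apply: H.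
Qed.

Lemma chain_subset S C D : chainIn S C -> D \subset C -> chainIn S D.
Proof.
move=> cC sDC; apply: chainP; first exact: subset_trans sDC (chain_sub cC).
by move=> x y xD yD; apply: (chain_cmp cC); apply: (subsetP sDC).
Qed.

Lemma chainU1 S C z : chainIn S C -> z \in S -> (forall x, x \in C -> x >=< z) ->
  chainIn S (z |: C).
Proof.
move=> cC zS H; apply: chainP.
  by apply/subsetP=> x; rewrite in_setU1 => /orP[/eqP->//|]; apply: (subsetP (chain_sub cC)).
move=> x y; rewrite !in_setU1 => /orP[/eqP->|xC] /orP[/eqP->|yC].
- exact: comparablexx.
- by rewrite comparable_sym; apply: H.
- by apply: H.
- exact: (chain_cmp cC).
Qed.

Lemma chain_neq S C x y : chainIn S C -> x \in C -> y \in C -> x != y -> (x < y) || (y < x).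
Proof.
move=> cC xC yC nxy; have := chain_cmp cC xC yC; rewrite /Order.comparable.
by case/orP=> H; [rewrite lt_neqAle nxy H | rewrite orbC lt_neqAle eq_sym nxy H].
Qed.

Definition rk S p := rankIn S p.

Lemma rank_ge S C p : chainIn S C -> p \in C -> (forall x, x \in C -> x <= p) ->
  (#|C|.-1 <= rankIn S p)%N.
Proof.
move=> cC pC H; rewrite /rankIn.
apply: (@leq_bigmax_cond _ (fun C => chainIn S C && (p \in C) && [forall x in C, x <= p]) (fun C => #|C|.-1) C).
rewrite cC pC /=; apply/forallP=> x; apply/implyP; exact: H.
Qed.

Lemma rank_wit S p : p \in S -> exists C, [/\ chainIn S C, p \in C,
   (forall x, x \in C -> x <= p) & #|C| = (rankIn S p).+1].
Proof.
move=> pS; rewrite /rankIn.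
set A := [pred C : {set P} | chainIn S C && (p \in C) && [forall x in C, x <= p]].
have A1 : [set p] \in A.
  rewrite inE in_set1 eqxx andbT; apply/andP; split.
  - by apply: chainP; [rewrite sub1set | move=> x y; rewrite !in_set1 => /eqP-> /eqP->; exact: comparablexx].
  - by apply/forallP=> x; apply/implyP; rewrite in_set1 => /eqP->.
have A0 : (0 < #|A|)%N by apply/card_gt0P; exists [set p].
have [C CA ->] := @eq_bigmax_cond _ A (fun C => #|C|.-1) A0.
move: CA; rewrite inE => /andP[/andP[cC pC] /forallP H].
exists C; split => //; first by move=> x xC; move: (H x); rewrite xC.
by rewrite prednK //; apply/card_gt0P; exists p.
Qed.

Lemma rank_lt S p q : p \in S -> q \in S -> p < q -> (rankIn S p < rankIn S q)%N.
Proof.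
move=> pS qS pq; have [C [cC pC Cp cardC]] := rank_wit pS.
have qC : q \notin C by apply/negP=> /Cp qp; have := lt_le_trans pq qp; rewrite ltxx.
have := @rank_ge S (q |: C) q; rewrite cardsU1 qC /= cardC; apply.
- apply: chainU1 => // x /Cp xp; apply: le_comparable; exact: le_trans xp (ltW pq).
- exact: setU11.
- by move=> x; rewrite in_setU1 => /orP[/eqP->//|/Cp xp]; exact: le_trans xp (ltW pq).
Qed.

Lemma chain_ext S C : chainIn S C -> exists M, maxchainIn S M /\ C \subset M.
Proof.
move=> cC.
have PC : chainIn S C && (C \subset C) by rewrite cC subxx.
have [M /andP[cM sCM] Mmax] := @arg_maxnP _ C (fun D => chainIn S D && (C \subset D)) (fun D => #|D|) PC.
exists M; split => //; rewrite /maxchainIn cM /=; apply/forallP=> D; apply/implyP=> /andP[cD sMD].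
have := Mmax D; rewrite cD (subset_trans sCM sMD) => /(_ isT) le.
by rewrite eq_sym eqEcard sMD; exact: le.
Qed.

Lemma le_rank_chain S C x y : chainIn S C -> x \in C -> y \in C ->
  (rankIn S x <= rankIn S y)%N -> x <= y.
Proof.
move=> cC xC yC; have [->//|nxy] := eqVneq x y.
have sCS := subsetP (chain_sub cC).
case/orP: (chain_neq cC xC yC nxy) => [/ltW//|yx].
by have := rank_lt (sCS _ yC) (sCS _ xC) yx; rewrite ltnNge => /negP.
Qed.

Section Ranked.
Variables (S : {set P}) (n : nat).
Hypothesis rkS : rankedIn S n.

Lemma rank_le_n p : p \in S -> (rankIn S p <= n)%N.
Proof.
move=> pS; have [C [cC _ _ cardC]] := rank_wit pS.
have [M [/rkS cardM sCM]] := chain_ext cC.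
by have := subset_leq_card sCM; rewrite cardC cardM.
Qed.

Lemma maxchain_all M : maxchainIn S M -> forall j, (j <= n)%N -> exists2 x, x \in M & rankIn S x = j.
Proof.
move=> mM; have cM : chainIn S M by case/andP: mM.
have sMS := subsetP (chain_sub cM).
pose v x : 'I_n.+1 := inord (rankIn S x).
have vinj : {in M &, injective v}.
  move=> x y xM yM; rewrite /v => /(congr1 val) /=.
  rewrite inordK; last by rewrite ltnS rank_le_n // sMS.
  rewrite inordK; last by rewrite ltnS rank_le_n // sMS.
  move=> exy.
  apply/eqP; apply: contraT => nxy.
  case/orP: (chain_neq cM xM yM nxy).
    by move=> /(rank_lt (sMS _ xM) (sMS _ yM)); rewrite exy ltnn.
  by move=> /(rank_lt (sMS _ yM) (sMS _ xM)); rewrite exy ltnn.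
have: v @: M = setT.
  by apply/eqP; rewrite eqEcard subsetT card_in_imset // (rkS mM) cardsT card_ord leqnn.
move=> vM j jn; have : inord j \in v @: M by rewrite vM.
case/imsetP=> x xM; rewrite /v => /(congr1 val) /=.
rewrite inordK; last by rewrite ltnS.
rewrite inordK; last by rewrite ltnS rank_le_n // sMS.
move=> ->.
by exists x.
Qed.

Lemma chain_all C : chainIn S C -> exists M, [/\ chainIn S M, C \subset M &
  forall j, (j <= n)%N -> exists2 x, x \in M & rankIn S x = j].
Proof.
move=> cC; have [M [mM sCM]] := chain_ext cC.
exists M; split => //; [by case/andP: mM | exact: maxchain_all].
Qed.

Lemma chain1 p : p \in S -> chainIn S [set p].
Proof.
by move=> pS; apply: chainP; [rewrite sub1set | move=> x y; rewrite !in_set1 => /eqP-> /eqP->; exact: comparablexx].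
Qed.

Lemma interp p q j : p \in S -> q \in S -> p <= q ->
  (rankIn S p <= j <= rankIn S q)%N -> exists2 z, z \in S & [/\ rankIn S z = j, p <= z & z <= q].
Proof.
move=> pS qS pq /andP[pj jq].
have c2 : chainIn S [set p; q].
  apply: chainP; first by apply/subsetP=> x; rewrite !inE => /orP[]/eqP->.
  by move=> x y; rewrite !inE => /orP[]/eqP-> /orP[]/eqP->; rewrite /Order.comparable ?lexx ?pq ?orbT.
have [M [cM sM hM]] := chain_all c2.
have jn : (j <= n)%N by apply: leq_trans jq (rank_le_n qS).
have [z zM rz] := hM j jn.
have pM : p \in M by apply: (subsetP sM); rewrite !inE eqxx.
have qM : q \in M by apply: (subsetP sM); rewrite !inE eqxx orbT.
exists z; first exact: (subsetP (chain_sub cM)).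
by split => //; apply: (le_rank_chain cM) => //; rewrite rz.
Qed.

Lemma go_up p j : p \in S -> (rankIn S p <= j <= n)%N -> exists2 q, q \in S & rankIn S q = j /\ p <= q.
Proof.
move=> pS /andP[pj jn].
have [M [cM sM hM]] := chain_all (chain1 pS).
have [z zM rz] := hM j jn.
have pM : p \in M by apply: (subsetP sM); rewrite in_set1.
exists z; first exact: (subsetP (chain_sub cM)).
by split => //; apply: (le_rank_chain cM) => //; rewrite rz.
Qed.

Lemma go_down p j : p \in S -> (j <= rankIn S p)%N -> exists2 q, q \in S & rankIn S q = j /\ q <= p.
Proof.
move=> pS pj.
have [M [cM sM hM]] := chain_all (chain1 pS).
have [z zM rz] := hM j (leq_trans pj (rank_le_n pS)).
have pM : p \in M by apply: (subsetP sM); rewrite in_set1.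
exists z; first exact: (subsetP (chain_sub cM)).
by split => //; apply: (le_rank_chain cM) => //; rewrite rz.
Qed.

End Ranked.
End Rank.

End MA.
Import MA.

Module MB.
Local Open Scope order_scope.


Lemma all6 (Q : 'I_6 -> Prop) : Q (@Ordinal 6 0 isT) -> Q (@Ordinal 6 1 isT) -> Q (@Ordinal 6 2 isT) ->
  Q (@Ordinal 6 3 isT) -> Q (@Ordinal 6 4 isT) -> Q (@Ordinal 6 5 isT) -> forall a, Q a.
Proof.
move=> H0 H1 H2 H3 H4 H5 [[|[|[|[|[|[|a]]]]]] Ha] //.
- by rewrite (bool_irrelevance Ha isT).
- by rewrite (bool_irrelevance Ha isT).
- by rewrite (bool_irrelevance Ha isT).
- by rewrite (bool_irrelevance Ha isT).
- by rewrite (bool_irrelevance Ha isT).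
- by rewrite (bool_irrelevance Ha isT).
Qed.

Lemma cr_E1 (a b : 'I_6) : crown6_lt a b -> (a < 3)%N /\ (3 <= b)%N.
Proof. by move: a b; do 2 apply: all6. Qed.

Lemma cr_up (a : 'I_6) : (a < 3)%N -> exists b : 'I_6, crown6_lt a b.
Proof. move: a; apply: all6 => // _; by [exists (@Ordinal 6 3 isT) | exists (@Ordinal 6 4 isT)]. Qed.

Lemma cr_dn (b : 'I_6) : (3 <= b)%N -> exists a : 'I_6, crown6_lt a b.
Proof. move: b; apply: all6 => // _; by [exists (@Ordinal 6 1 isT) | exists (@Ordinal 6 2 isT)]. Qed.

Lemma cr_miss (b : 'I_6) : (3 <= b)%N -> exists2 a : 'I_6, (a < 3)%N & ~~ crown6_lt a b.
Proof. move: b; apply: all6 => // _; by [exists (@Ordinal 6 0 isT) | exists (@Ordinal 6 1 isT) | exists (@Ordinal 6 2 isT)]. Qed.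

Lemma cr_uniq (a a' b : 'I_6) : (a < 3)%N -> (a' < 3)%N -> (3 <= b)%N ->
  ~~ crown6_lt a b -> ~~ crown6_lt a' b -> a = a'.
Proof. by move: a a' b; do 3 apply: all6. Qed.

Lemma cr_inj (a b b' : 'I_6) : (a < 3)%N -> (3 <= b)%N -> (3 <= b')%N ->
  ~~ crown6_lt a b -> ~~ crown6_lt a b' -> b = b'.
Proof. by move: a b b'; do 3 apply: all6. Qed.

Lemma card3 (T : finType) (a b c : T) : a != b -> a != c -> b != c -> #|[set a; b; c]| = 3%N.
Proof.
move=> ab ac bc; have -> : [set a; b; c] = c |: [set a; b] by rewrite setUC.
by rewrite cardsU1 cards2 !inE ab negb_or eq_sym ac eq_sym bc.
Qed.

Lemma card_lo : #|[set a : 'I_6 | (a < 3)%N]| = 3%N.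
Proof.
have -> : [set a : 'I_6 | (a < 3)%N] = [set (@Ordinal 6 0 isT); (@Ordinal 6 1 isT); (@Ordinal 6 2 isT)].
  by apply/setP; apply: all6; rewrite !inE.
by rewrite card3.
Qed.

Lemma card_hi : #|[set a : 'I_6 | (3 <= a)%N]| = 3%N.
Proof.
have -> : [set a : 'I_6 | (3 <= a)%N] = [set (@Ordinal 6 3 isT); (@Ordinal 6 4 isT); (@Ordinal 6 5 isT)].
  by apply/setP; apply: all6; rewrite !inE.
by rewrite card3.
Qed.

Section Stack.
Context {d : Order.disp_t} {P : finPOrderType d}.
Variables (S : {set P}) (m : nat).
Hypothesis rkS : rankedIn S m.
Hypothesis m0 : (0 < m)%N.
Hypothesis crS : forall i, (i < m)%N -> iso_C6 (levelIn S i i.+1).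
Local Notation r := (rankIn S).

Definition K j := [set p in S | r p == j].

Lemma KP j p : (p \in K j) = (p \in S) && (r p == j).
Proof. by rewrite inE. Qed.

Lemma crown_lev i : (i < m)%N -> exists f : 'I_6 -> P, [/\ injective f,
   (forall a, f a \in S /\ r (f a) = if (a < 3)%N then i else i.+1),
   (forall p, p \in S -> (i <= r p <= i.+1)%N -> exists a, p = f a) &
   forall a b, (f a < f b) = crown6_lt a b].
Proof.
move=> im; have [f [finj fim fo]] := crS im.
have fin a : f a \in levelIn S i i.+1 by rewrite -fim; apply: imset_f.
have fS a : f a \in S by move: (fin a); rewrite inE => /andP[].
have fr a : (i <= r (f a) <= i.+1)%N by move: (fin a); rewrite inE => /andP[].
exists f; split => //.
- move=> a; split => //; case: ifP => a3.
  + have [b ab] := cr_up a3; rewrite -fo in ab.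
    have := rank_lt (fS a) (fS b) ab; have := fr a; have := fr b.
    by move=> /andP[? ?] /andP[? ?] ?; lia.
  + have a3' : (3 <= a)%N by rewrite leqNgt a3.
    have [b ba] := cr_dn a3'; rewrite -fo in ba.
    have := rank_lt (fS b) (fS a) ba; have := fr a; have := fr b.
    by move=> /andP[? ?] /andP[? ?] ?; lia.
- move=> p pS pr; have : p \in levelIn S i i.+1 by rewrite inE pS.
  by rewrite -fim => /imsetP[a _ ->]; exists a.
Qed.

Lemma K_img i : (i < m)%N -> exists f : 'I_6 -> P, [/\ injective f,
  K i = f @: [set a : 'I_6 | (a < 3)%N], K i.+1 = f @: [set a : 'I_6 | (3 <= a)%N] &
  forall a b, (f a < f b) = crown6_lt a b].
Proof.
move=> im; have [f [finj fr fall fo]] := crown_lev im.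
exists f; split => //; apply/setP=> p; rewrite KP.
- apply/idP/imsetP.
  + case/andP=> pS /eqP rp; have hr : (i <= r p <= i.+1)%N by rewrite rp leqnn leqnSn.
    have [a pa] := fall p pS hr; subst p.
    exists a => //; rewrite inE; have [_] := fr a; case: ifP => // _ h.
    by move: rp; rewrite h => /eqP; rewrite -[X in _ == X]addn0 -addn1 eqn_add2l.
  + case=> a; rewrite inE => a3 ->; have [fS] := fr a; rewrite a3 => ->.
    by rewrite fS eqxx.
- apply/idP/imsetP.
  + case/andP=> pS /eqP rp; have hr : (i <= r p <= i.+1)%N by rewrite rp leqnSn leqnn.
    have [a pa] := fall p pS hr; subst p.
    exists a => //; rewrite inE; have [_] := fr a; case: ifP => [_ h|]; last by move/negbT; rewrite -leqNgt.
    by move: rp; rewrite h => /eqP; rewrite -[X in X == _]addn0 -addn1 eqn_add2l.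
  + case=> a; rewrite inE leqNgt => a3 ->; have [fS] := fr a; rewrite (negbTE a3) => ->.
    by rewrite fS eqxx.
Qed.

Lemma K_card j : (j <= m)%N -> #|K j| = 3%N.
Proof.
rewrite leq_eqVlt => /orP[/eqP->|jm].
  have m1 : (m.-1 < m)%N by rewrite prednK.
  have [f [finj _ ]] := K_img m1; rewrite prednK // => -> _.
  by rewrite card_imset // card_hi.
have [f [finj -> _ _]] := K_img jm.
by rewrite card_imset // card_lo.
Qed.

Lemma miss_ex i y : (i < m)%N -> y \in K i.+1 -> exists2 x, x \in K i & ~~ (x < y).
Proof.
move=> im yK; have [f [finj Ki Ki1 fo]] := K_img im.
move: yK; rewrite Ki1 => /imsetP[b]; rewrite inE => b3 ->.
have [a a3 nab] := cr_miss b3; exists (f a); last by rewrite fo.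
by rewrite Ki; apply: imset_f; rewrite inE.
Qed.

Lemma miss_uniq i x x' y : (i < m)%N -> x \in K i -> x' \in K i -> y \in K i.+1 ->
  ~~ (x < y) -> ~~ (x' < y) -> x = x'.
Proof.
move=> im; have [f [finj Ki Ki1 fo]] := K_img im.
rewrite Ki Ki1 => /imsetP[a]; rewrite inE => a3 -> /imsetP[a']; rewrite inE => a3' ->.
move=> /imsetP[b]; rewrite inE => b3 ->; rewrite !fo => h1 h2.
by rewrite (cr_uniq a3 a3' b3 h1 h2).
Qed.

Lemma miss_inj i x y y' : (i < m)%N -> x \in K i -> y \in K i.+1 -> y' \in K i.+1 ->
  ~~ (x < y) -> ~~ (x < y') -> y = y'.
Proof.
move=> im; have [f [finj Ki Ki1 fo]] := K_img im.
rewrite Ki Ki1 => /imsetP[a]; rewrite inE => a3 -> /imsetP[b]; rewrite inE => b3 ->.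
move=> /imsetP[b']; rewrite inE => b3' ->; rewrite !fo => h1 h2.
by rewrite (cr_inj a3 b3 b3' h1 h2).
Qed.

Definition pi y := odflt y [pick x in S | ((r x).+1 == r y) && ~~ (x < y)].

Lemma rS p : p \in S -> (r p <= m)%N.
Proof. by move=> pS; apply: (rank_le_n rkS). Qed.

Lemma pi_spec y : y \in S -> (0 < r y)%N -> [/\ pi y \in S, (r (pi y)).+1 = r y & ~~ (pi y < y)].
Proof.
move=> yS ry; have im : ((r y).-1 < m)%N by rewrite prednK //; apply: rS.
have yK : y \in K ((r y).-1).+1 by rewrite KP yS prednK ?eqxx.
have [x] := miss_ex im yK; rewrite KP => /andP[xS /eqP rx] nxy.
rewrite /pi; case: pickP => [z /andP[zS /andP[/eqP rz nzy]] | /(_ x)] /=; first by [].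
by rewrite xS rx prednK // eqxx nxy.
Qed.

Lemma lt_pi x y : x \in S -> y \in S -> (r x).+1 = r y -> (x < y) = (x != pi y).
Proof.
move=> xS yS rxy; have ry : (0 < r y)%N by rewrite -rxy.
have [pS rp np] := pi_spec yS ry.
apply/idP/idP; first by apply: contraTneq => ->.
apply: contraR => nxy; apply/eqP.
have im : (r x < m)%N by rewrite rxy rS.
apply: (miss_uniq (y := y) im) => //; rewrite ?KP ?xS ?pS ?yS ?rxy ?eqxx //.
by rewrite -rxy in rp; case: rp => ->; rewrite eqxx.
Qed.

Definition base y := iter (r y) pi y.

Lemma iter_pi k y : y \in S -> r y = k -> iter k pi y \in K 0.
Proof.
elim: k y => [|k IH] y yS ry; first by rewrite /= KP yS ry.
have ry0 : (0 < r y)%N by rewrite ry.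
have [pS rp _] := pi_spec yS ry0.
rewrite iterSr; apply: IH => //; apply/eqP; by rewrite -eqSS rp ry.
Qed.

Lemma base_spec y : y \in S -> base y \in K 0.
Proof. by move=> yS; apply: iter_pi. Qed.

Lemma base_pi y : y \in S -> (0 < r y)%N -> base (pi y) = base y.
Proof.
move=> yS ry; have [pS rp _] := pi_spec yS ry.
by rewrite /base -rp iterSr.
Qed.

Lemma base_inj_k k y y' : y \in S -> y' \in S -> r y = k -> r y' = k -> base y = base y' -> y = y'.
Proof.
elim: k y y' => [|k IH] y y' yS yS' ry ry'; first by rewrite /base ry ry'.
have ry0 : (0 < r y)%N by rewrite ry.
have ry0' : (0 < r y')%N by rewrite ry'.
have [pS rp np] := pi_spec yS ry0; have [pS' rp' np'] := pi_spec yS' ry0'.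
rewrite -(base_pi yS ry0) -(base_pi yS' ry0') => eb.
have epi : pi y = pi y'.
  by apply: (IH _ _ pS pS' _ _ eb); apply/eqP; rewrite -eqSS ?rp ?rp' ?ry ?ry'.
have im : (k < m)%N by rewrite -ry rS.
have rpk : r (pi y) = k by apply/eqP; rewrite -eqSS rp ry.
apply: (miss_inj (x := pi y) im); rewrite ?KP ?pS ?rpk ?yS ?ry ?yS' ?ry' ?eqxx //.
by rewrite epi.
Qed.

Lemma base_inj y y' : y \in S -> y' \in S -> r y = r y' -> base y = base y' -> y = y'.
Proof. by move=> yS yS' e; apply: (base_inj_k yS yS' (erefl _)). Qed.

Lemma base_surj j x : (j <= m)%N -> x \in K 0 -> exists2 y, y \in K j & base y = x.
Proof.
move=> jm xK.
have sub : base @: K j \subset K 0.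
  by apply/subsetP=> z /imsetP[y]; rewrite KP => /andP[yS _] ->; apply: base_spec.
have inj : {in K j &, injective base}.
  move=> y y'; rewrite !KP => /andP[yS /eqP ry] /andP[yS' /eqP ry'].
  by apply: base_inj => //; rewrite ry ry'.
have e : base @: K j = K 0.
  by apply/eqP; rewrite eqEcard sub card_in_imset // !K_card.
by move: xK; rewrite -e => /imsetP[y yK ->]; exists y.
Qed.

Lemma lt_adj p q : p \in S -> q \in S -> (r p).+1 = r q -> (p < q) = (base p != base q).
Proof.
move=> pS qS e; rewrite (lt_pi pS qS e).
have q0 : (0 < r q)%N by rewrite -e.
have [pqS rpq _] := pi_spec qS q0.
rewrite -(base_pi qS q0); apply/idP/idP; apply: contra_neq; last by move=> ->.
apply: base_inj => //; apply/eqP; by rewrite -eqSS rpq e.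
Qed.

Lemma lt_char p q : p \in S -> q \in S ->
  (p < q) = ((r p).+2 <= r q)%N || (((r p).+1 == r q) && (base p != base q)).
Proof.
move=> pS qS; apply/idP/idP.
  move=> pq; have := rank_lt pS qS pq; rewrite leq_eqVlt => /orP[/eqP e|->//].
  by rewrite e eqxx -lt_adj ?pq ?orbT.
case/orP => [h|/andP[/eqP e ne]]; last by rewrite lt_adj.
have [w wS [rw wq]] := go_down rkS qS h.
have c1 := cardsD1 (base w) (K 0); have c2 := cardsD1 (base p) (K 0 :\ base w).
rewrite K_card // in c1.
have : (0 < #|K 0 :\ base w :\ base p|)%N.
  by move: c1 c2; case: (base w \in K 0); case: (base p \in K 0 :\ base w) => /= c1 c2; lia.
case/card_gt0P=> t; rewrite in_setD1 => /andP[ntp]; rewrite in_setD1 => /andP[ntw tK].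
have rpm : ((r p).+1 <= m)%N by apply: leq_trans (rS wS); rewrite rw.
have [u] := base_surj rpm tK; rewrite KP => /andP[uS /eqP ru] bu.
have pu : p < u by rewrite lt_adj // bu eq_sym.
have uw : u < w by rewrite lt_adj // ?bu ?ru ?rw // eq_sym.
exact: lt_le_trans (lt_trans pu uw) wq.
Qed.

Variables e0 e1 e2 : P.
Hypothesis he : K 0 = [set e0; e1; e2].
Hypotheses (e01 : e0 != e1) (e02 : e0 != e2) (e12 : e1 != e2).

Definition tau x := if x == e0 then e1 else if x == e1 then e2 else e0.

Lemma tau_in x : x \in K 0 -> [/\ tau x \in K 0, tau x != x & tau (tau (tau x)) = x].
Proof.
rewrite he /tau !inE => /orP[/orP[]|]/eqP->;
  rewrite ?eqxx ?(negbTE e01) ?(negbTE e02) ?(negbTE e12) ?(eq_sym e1 e0) ?(eq_sym e2 e0) ?(eq_sym e2 e1)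
   ?(negbTE e01) ?(negbTE e02) ?(negbTE e12) ?eqxx ?orbT //=;
  by rewrite ?eqxx ?(negbTE e01) ?(negbTE e02) ?(negbTE e12) ?(eq_sym e1 e0) ?(eq_sym e2 e0) ?(eq_sym e2 e1) ?(negbTE e01) ?(negbTE e02) ?(negbTE e12) ?eqxx ?orbT.
Qed.

Lemma tau_inj x y : x \in K 0 -> y \in K 0 -> tau x = tau y -> x = y.
Proof.
move=> xK yK e; have [_ _ <-] := tau_in xK; have [_ _ <-] := tau_in yK; by rewrite e.
Qed.

Definition sig p := odflt p [pick q in S | (r q == r p) && (base q == tau (base p))].

Lemma sig_spec p : p \in S -> [/\ sig p \in S, r (sig p) = r p & base (sig p) = tau (base p)].
Proof.
move=> pS; have [tK _ _] := tau_in (base_spec pS).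
have [y] := base_surj (rS pS) tK; rewrite KP => /andP[yS /eqP ry] yb.
rewrite /sig; case: pickP => [z /andP[zS /andP[/eqP rz /eqP bz]] | /(_ y)] //=.
by rewrite yS ry yb !eqxx.
Qed.

Lemma stack_auto : automorphicIn S.
Proof.
have sig3 p : p \in S -> sig (sig (sig p)) = p.
  move=> pS; have [s1 r1 b1] := sig_spec pS; have [s2 r2 b2] := sig_spec s1.
  have [s3 r3 b3] := sig_spec s2.
  apply: base_inj => //; first by rewrite r3 r2 r1.
  by rewrite b3 b2 b1; case: (tau_in (base_spec pS)).
have sigmono p q : p \in S -> q \in S -> p <= q -> sig p <= sig q.
  move=> pS qS; rewrite le_eqVlt => /orP[/eqP->|pq]; first exact: lexx.
  have [s1 r1 b1] := sig_spec pS; have [s2 r2 b2] := sig_spec qS.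
  apply: ltW; rewrite lt_char // r1 r2 b1 b2; rewrite lt_char // in pq.
  case/orP: pq => [->//|/andP[e ne]]; rewrite e /=; apply/orP; right.
  by apply: contra_neq ne; apply: tau_inj; apply: base_spec.
exists sig, (fun p => sig (sig p)); split.
- by split=> p pS; case: (sig_spec pS) => // s1 _ _; case: (sig_spec s1).
- by split=> p pS /=; apply: sig3.
- by move=> p q pS qS; apply: sigmono.
- move=> p q pS qS pq; have [s1 _ _] := sig_spec pS; have [s2 _ _] := sig_spec qS.
  exact: (sigmono _ _ s1 s2 (sigmono _ _ pS qS pq)).
- move=> p pS; have [_ r1 b1] := sig_spec pS; apply/eqP=> e.
  by case: (tau_in (base_spec pS)) => _ /eqP ne _; apply: ne; rewrite -b1 e.
Qed.

End Stack.

Ltac wit6 := first [ by exists (@Ordinal 6 0 isT) | by exists (@Ordinal 6 1 isT) | by exists (@Ordinal 6 2 isT)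
  | by exists (@Ordinal 6 3 isT) | by exists (@Ordinal 6 4 isT) | by exists (@Ordinal 6 5 isT) ].

Lemma cr_sep (a b : 'I_6) : a != b -> exists c : 'I_6, (crown6_lt a c != crown6_lt b c) || (crown6_lt c a != crown6_lt c b).
Proof. move: a b; do 2 apply: all6; move=> //= _; wit6. Qed.

End MB.
Import MB.

Module MC.
Local Open Scope order_scope.


Section Conv.
Context {d : Order.disp_t} {P : finPOrderType d}.

Lemma stack6_auto (S : {set P}) : stack6In S -> automorphicIn S.
Proof.
case=> m [m1 rk cr]; have [f [finj K0 _ _]] := K_img m1 cr m1.
have e : f @: [set a : 'I_6 | (a < 3)%N] = [set f (@Ordinal 6 0 isT); f (@Ordinal 6 1 isT); f (@Ordinal 6 2 isT)].
  have -> : [set a : 'I_6 | (a < 3)%N] = [set (@Ordinal 6 0 isT); (@Ordinal 6 1 isT); (@Ordinal 6 2 isT)].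
    by apply/setP; apply: all6; rewrite !inE.
  by rewrite !imsetU !imset_set1.
rewrite e in K0.
by apply: (stack_auto rk m1 cr K0); rewrite (inj_eq finj).
Qed.

Lemma anti2_auto (S : {set P}) : antichain2 S -> automorphicIn S.
Proof.
case=> /eqP/cards2P[a [b [ab ->]]] anti.
have leE x y : x \in [set a; b] -> y \in [set a; b] -> x <= y -> x = y.
  move=> xS yS xy; apply/eqP; apply: contraT => nxy.
  by move: (anti x y xS yS nxy); rewrite /Order.comparable xy.
pose g x := if x == a then b else if x == b then a else x.
have ga : g a = b by rewrite /g eqxx.
have gb : g b = a by rewrite /g eq_sym (negbTE ab) eqxx.
have gS x : x \in [set a; b] -> g x \in [set a; b].
  by rewrite !inE => /orP[]/eqP->; rewrite ?ga ?gb eqxx ?orbT.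
have gg x : x \in [set a; b] -> g (g x) = x.
  by rewrite !inE => /orP[]/eqP->; rewrite ?ga ?gb.
exists g, g; split.
- by split.
- by split => x xS; apply: gg.
- by move=> x y xS yS /(leE _ _ xS yS) ->.
- by move=> x y xS yS /(leE _ _ xS yS) ->.
- by move=> x; rewrite !inE => /orP[]/eqP->; rewrite ?ga ?gb // eq_sym.
Qed.

Lemma tower_auto : tower6 P -> automorphic P.
Proof.
case=> k [k0 [blk [hord hblk]]].
have ex i : exists gh : (P -> P) * (P -> P), let B := [set x | blk x == i] in
    [/\ {in B, forall x, gh.1 x \in B} /\ {in B, forall x, gh.2 x \in B},
        {in B, cancel gh.1 gh.2} /\ {in B, cancel gh.2 gh.1},
        ({in B &, forall x y, x <= y -> gh.1 x <= gh.1 y}),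
        ({in B &, forall x y, x <= y -> gh.2 x <= gh.2 y}) &
        {in B, forall x, gh.1 x != x}].
  have [g [h H]] : automorphicIn [set x | blk x == i].
    by case: (hblk i) => [/anti2_auto|/stack6_auto].
  by exists (g, h).
have [GH HGH] := fin_all_exists ex.
pose g x := (GH (blk x)).1 x; pose h x := (GH (blk x)).2 x.
have inB x : x \in [set y | blk y == blk x] by rewrite inE.
have bg x : blk (g x) = blk x.
  by case: (HGH (blk x)) => [[H1 _] _ _ _ _]; move: (H1 x (inB x)); rewrite inE => /eqP.
have bh x : blk (h x) = blk x.
  by case: (HGH (blk x)) => [[_ H1] _ _ _ _]; move: (H1 x (inB x)); rewrite inE => /eqP.
have blk_le x y : x <= y -> (blk x <= blk y)%N.
  move=> xy; rewrite leqNgt; apply/negP=> /hord yx.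
  by have := le_lt_trans xy yx; rewrite ltxx.
exists g, h; split.
- by split => x _; rewrite inE.
- split => x _.
    rewrite /h /g bg; by case: (HGH (blk x)) => _ [H1 _] _ _ _; apply: H1.
  rewrite /h /g bh; by case: (HGH (blk x)) => _ [_ H1] _ _ _; apply: H1.
- move=> x y _ _ xy; have := blk_le _ _ xy; rewrite leq_eqVlt => /orP[/eqP/ord_inj e|lt].
    have yB : y \in [set z | blk z == blk x] by rewrite inE e.
    rewrite /g -e; by case: (HGH (blk x)) => _ _ H1 _ _; apply: H1.
  by apply: ltW; apply: hord; rewrite !bg.
- move=> x y _ _ xy; have := blk_le _ _ xy; rewrite leq_eqVlt => /orP[/eqP/ord_inj e|lt].
    have yB : y \in [set z | blk z == blk x] by rewrite inE e.
    rewrite /h -e; by case: (HGH (blk x)) => _ _ _ H1 _; apply: H1.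
  by apply: ltW; apply: hord; rewrite !bh.
- by move=> x _; rewrite /g; case: (HGH (blk x)) => _ _ _ _ H1; apply: H1.
Qed.

End Conv.

End MC.
Import MC.

Module MD.
Local Open Scope order_scope.


Lemma card_sep (T : finType) (A : {set T}) (Q : pred T) :
  #|[set y in A | Q y]| = (\sum_(y in A) Q y)%N.
Proof.
rewrite -sum1_card (eq_bigl (fun y => (y \in A) && Q y)); last by move=> y; rewrite inE.
by rewrite big_mkcondr /=; apply: eq_bigr => y _; case: (Q y).
Qed.

Section Fwd.
Context {d : Order.disp_t} {P : finPOrderType d}.
Variable n : nat.
Hypothesis rk : rankedIn [set: P] n.
Hypothesis wd : width_le P 3.
Variables g h : P -> P.
Hypothesis gK : cancel g h.
Hypothesis hK : cancel h g.
Hypothesis gmono : forall x y, x <= y -> g x <= g y.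
Hypothesis hmono : forall x y, x <= y -> h x <= h y.
Hypothesis gfix : forall x, g x != x.
Hypothesis minQ : forall Q : {set P}, retract Q -> Q \proper [set: P] -> ~ automorphicIn Q.

Local Notation r := (rankIn [set: P]).
Definition L i := [set p : P | r p == i].

Lemma inT (x : P) : x \in [set: P]. Proof. by rewrite inE. Qed.

Lemma r_le x : (r x <= n)%N.
Proof. exact: (rank_le_n rk (inT x)). Qed.

Lemma lt_r x y : x < y -> (r x < r y)%N.
Proof. exact: (rank_lt (inT x) (inT y)). Qed.

Lemma eq_r_le x y : r x = r y -> x <= y -> x = y.
Proof.
move=> e; rewrite le_eqVlt => /orP[/eqP//|/lt_r]; by rewrite e ltnn.
Qed.

Lemma rank_mono (a b : P -> P) : cancel a b -> (forall x y, x <= y -> a x <= a y) ->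
  forall x, (r x <= r (a x))%N.
Proof.
move=> aK amono x; have [C [cC xC Cx cardC]] := rank_wit (inT x).
have ainj : injective a := can_inj aK.
have := @rank_ge _ _ [set: P] (a @: C) (a x); rewrite card_imset // cardC /=; apply.
- apply: chainP; first exact: subsetT.
  move=> u v /imsetP[u' u'C ->] /imsetP[v' v'C ->].
  by case/orP: (chain_cmp cC u'C v'C) => /amono; [apply: le_comparable | apply: ge_comparable].
- exact: imset_f.
- by move=> y /imsetP[y' y'C ->]; apply: amono; apply: Cx.
Qed.

Lemma rg x : r (g x) = r x.
Proof.
apply/eqP; rewrite eqn_leq (rank_mono gK gmono) andbT.
by have := rank_mono hK hmono (g x); rewrite gK.
Qed.

Lemma rh x : r (h x) = r x.
Proof. by rewrite -{2}(hK x) rg. Qed.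

Lemma g_lt x y : x < y -> g x < g y.
Proof.
rewrite !lt_neqAle => /andP[nxy /gmono ->]; rewrite andbT.
by apply: contra_neq nxy => /(congr1 h); rewrite !gK.
Qed.

Lemma h_lt x y : x < y -> h x < h y.
Proof.
rewrite !lt_neqAle => /andP[nxy /hmono ->]; rewrite andbT.
by apply: contra_neq nxy => /(congr1 g); rewrite !hK.
Qed.

Lemma g_lt_eq x y : (g x < g y) = (x < y).
Proof. by apply/idP/idP => [/h_lt|/g_lt]; rewrite ?gK. Qed.

Lemma L_g i x : (g x \in L i) = (x \in L i).
Proof. by rewrite !inE rg. Qed.

Lemma L_h i x : (h x \in L i) = (x \in L i).
Proof. by rewrite !inE rh. Qed.

Lemma L_card i : (#|L i| <= 3)%N.
Proof.
apply: wd => x y; rewrite !inE => /eqP rx /eqP ry nxy; apply/negP; rewrite /Order.comparable.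
case/orP=> /eq_r_le; rewrite rx ry => /(_ erefl) e; by rewrite e eqxx in nxy.
Qed.

Lemma L_ne i : (i <= n)%N -> exists x, x \in L i.
Proof.
move=> iN; have c0 : chainIn [set: P] set0 by apply: chainP; rewrite ?sub0set // => x y; rewrite inE.
have [M [_ _ hM]] := chain_all rk c0; have [x _ rx] := hM i iN.
by exists x; rewrite inE rx.
Qed.

Lemma L_ge2 i : (i <= n)%N -> (2 <= #|L i|)%N.
Proof.
move=> iN; have [x xL] := L_ne iN.
have : [set x; g x] \subset L i by rewrite inE in xL; apply/subsetP=> y; rewrite !inE => /orP[]/eqP->; rewrite ?rg.
by move/subset_leq_card; rewrite cards2 eq_sym gfix.
Qed.

Lemma L_trans i x y : x \in L i -> y \in L i -> [|| y == x, y == g x | y == g (g x)].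
Proof.
move=> xL yL; apply/norP=> [[nyx /norP[nygx nyggx]]].
have gxL : g x \in L i by rewrite L_g.
have ggxL : g (g x) \in L i by rewrite !L_g.
have gyL : g y \in L i by rewrite L_g.
have s3 : [set x; g x; y] \subset L i by move: (xL) (yL); rewrite !inE => xL0 yL0; apply/subsetP=> z; rewrite !inE => /orP[/orP[]|]/eqP->; rewrite ?rg.
have c3 : #|[set x; g x; y]| = 3%N by rewrite card3 // eq_sym ?gfix // eq_sym.
have e3 : L i = [set x; g x; y].
  by apply/eqP; rewrite eq_sym eqEcard s3 c3 L_card.
have ginj : injective g := can_inj gK.
move: ggxL; rewrite e3 !inE => /orP[/orP[/eqP ggx|/eqP ggx]|/eqP ggx].
- move: gyL; rewrite e3 !inE => /orP[/orP[/eqP gy|/eqP gy]|/eqP gy].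
  + by move: nygx; rewrite -ggx in gy; rewrite (ginj _ _ gy) eqxx.
  + by move: nyx; rewrite (ginj _ _ gy) eqxx.
  + by move: (gfix y); rewrite gy eqxx.
- by move: (gfix (g x)); rewrite ggx eqxx.
- by move: nyggx; rewrite ggx eqxx.
Qed.

Lemma auto_inv (Q : {set P}) : (forall x, x \in Q -> g x \in Q /\ h x \in Q) -> automorphicIn Q.
Proof.
move=> HQ; exists g, h; split.
- by split => x /HQ [].
- by split => x _; rewrite ?gK ?hK.
- by move=> x y _ _; apply: gmono.
- by move=> x y _ _; apply: hmono.
- by move=> x _; apply: gfix.
Qed.

Lemma no_retract (Q : {set P}) (f : P -> P) : (forall x, f x \in Q) ->
  (forall x y, x <= y -> f x <= f y) -> {in Q, forall q, f q = q} ->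
  (exists x, x \notin Q) -> (forall x, x \in Q -> g x \in Q /\ h x \in Q) -> False.
Proof.
move=> fQ fmono fid [x xQ] inv; apply: (minQ (Q := Q)).
- by exists f.
- rewrite properT; apply: contraNneq xQ => ->; exact: inT.
- exact: auto_inv.
Qed.

Lemma noL_inv i x : x \in ~: L i -> g x \in ~: L i /\ h x \in ~: L i.
Proof. by rewrite !inE !rg !rh. Qed.

Definition up x := [set y | (r y == (r x).+1) && (x < y)].
Definition dn y := [set x | ((r x).+1 == r y) && (x < y)].

Lemma up_le x y u : up x = [set u] -> x < y -> u <= y.
Proof.
move=> ux xy.
have h1 : (r x <= (r x).+1 <= r y)%N by rewrite leqnSn lt_r.
have [z _ [rz xz zy]] := interp rk (inT x) (inT y) (ltW xy) h1.
have : z \in up x.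
  rewrite inE rz eqxx lt_neqAle xz andbT /=; apply/eqP=> exz; move: rz; rewrite -exz; lia.
by rewrite ux in_set1 => /eqP <-.
Qed.

Lemma dn_le x y u : dn y = [set u] -> x < y -> x <= u.
Proof.
move=> uy xy.
have ry0 : (0 < r y)%N by apply: leq_ltn_trans (lt_r xy).
have h1 : (r x <= (r y).-1 <= r y)%N by rewrite leq_pred andbT -ltnS prednK // lt_r.
have [z _ [rz xz zy]] := interp rk (inT x) (inT y) (ltW xy) h1.
have : z \in dn y.
  rewrite inE rz prednK // eqxx lt_neqAle zy andbT /=; apply/eqP=> ezy; move: rz; rewrite ezy; lia.
by rewrite uy in_set1 => /eqP <-.
Qed.

Lemma RU i : (i < n)%N -> (forall x, x \in L i -> #|up x| = 1%N) -> False.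
Proof.
move=> iN H.
have hu x : x \in L i -> exists u, up x = [set u] by move=> /H /eqP/cards1P.
pose f x := if r x == i then odflt x [pick y in up x] else x.
have fx x : x \in L i -> exists u, up x = [set u] /\ f x = u.
  move=> xL; have [u ux] := hu x xL; exists u; split => //.
  rewrite /f; move: xL; rewrite inE => ->; case: pickP => [y|/(_ u)]; rewrite ux in_set1 ?eqxx //.
  by move/eqP.
have [x0 x0L] := L_ne (ltnW iN).
apply: (no_retract (Q := ~: L i) (f := f)).
- move=> x; case: (boolP (x \in L i)) => xL.
    have [u [ux ->]] := fx x xL; have : u \in up x by rewrite ux set11.
    rewrite !inE => /andP[/eqP -> _]; move: xL; rewrite inE => /eqP->; lia.
  by rewrite /f; move: (xL); rewrite inE => /negbTE ->; rewrite inE.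
- move=> x y xy; case: (boolP (x \in L i)) => xL; case: (boolP (y \in L i)) => yL.
  + move: (xL) (yL); rewrite !inE => /eqP rx /eqP ry.
    by rewrite (eq_r_le _ xy) ?rx ?ry ?lexx.
  + have [u [ux ->]] := fx x xL; have -> : f y = y by rewrite /f; move: yL; rewrite inE => /negbTE->.
    apply: (up_le ux); rewrite lt_neqAle xy andbT; apply: contraNneq yL => <-; exact: xL.
  + have [u [uy ->]] := fx y yL; have -> : f x = x by rewrite /f; move: xL; rewrite inE => /negbTE->.
    have : u \in up y by rewrite uy set11.
    by rewrite inE => /andP[_ yu]; exact: ltW (le_lt_trans xy yu).
  + by rewrite /f; move: xL yL; rewrite !inE => /negbTE-> /negbTE->.
- by move=> x; rewrite inE => xL; rewrite /f; move: xL; rewrite inE => /negbTE->.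
- by exists x0; rewrite inE negbK.
- exact: noL_inv.
Qed.

Lemma RD i : (0 < i <= n)%N -> (forall y, y \in L i -> #|dn y| = 1%N) -> False.
Proof.
move=> /andP[i0 iN] H.
have hu x : x \in L i -> exists u, dn x = [set u] by move=> /H /eqP/cards1P.
pose f x := if r x == i then odflt x [pick y in dn x] else x.
have fx x : x \in L i -> exists u, dn x = [set u] /\ f x = u.
  move=> xL; have [u ux] := hu x xL; exists u; split => //.
  rewrite /f; move: xL; rewrite inE => ->; case: pickP => [y|/(_ u)]; rewrite ux in_set1 ?eqxx //.
  by move/eqP.
have [x0 x0L] := L_ne iN.
apply: (no_retract (Q := ~: L i) (f := f)).
- move=> x; case: (boolP (x \in L i)) => xL.
    have [u [ux ->]] := fx x xL; have : u \in dn x by rewrite ux set11.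
    rewrite !inE => /andP[/eqP ru _]; move: xL; rewrite inE => /eqP rx; lia.
  by rewrite /f; move: (xL); rewrite inE => /negbTE ->; rewrite inE.
- move=> x y xy; case: (boolP (x \in L i)) => xL; case: (boolP (y \in L i)) => yL.
  + move: (xL) (yL); rewrite !inE => /eqP rx /eqP ry.
    by rewrite (eq_r_le _ xy) ?rx ?ry ?lexx.
  + have [u [ux ->]] := fx x xL; have -> : f y = y by rewrite /f; move: yL; rewrite inE => /negbTE->.
    have : u \in dn x by rewrite ux set11.
    by rewrite inE => /andP[_ ux']; exact: ltW (lt_le_trans ux' xy).
  + have [u [uy ->]] := fx y yL; have -> : f x = x by rewrite /f; move: xL; rewrite inE => /negbTE->.
    apply: (dn_le uy); rewrite lt_neqAle xy andbT; apply: contraNneq xL => ->; exact: yL.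
  + by rewrite /f; move: xL yL; rewrite !inE => /negbTE-> /negbTE->.
- by move=> x; rewrite inE => xL; rewrite /f; move: xL; rewrite inE => /negbTE->.
- by exists x0; rewrite inE negbK.
- exact: noL_inv.
Qed.

Definition comp j : Prop := forall x y, x \in L j -> y \in L j.+1 -> x < y.

Lemma above i x z : x \in L i -> (i = n \/ comp i) -> (i < r z)%N -> x < z.
Proof.
move=> xL [ein|ci] iz; first by move: (r_le z); rewrite -ein leqNgt iz.
have [w _ [rw wz]] := go_down rk (inT z) iz.
by apply: lt_le_trans wz; apply: ci; rewrite // inE rw.
Qed.

Lemma below i x z : x \in L i -> (i = 0%N \/ comp i.-1) -> (r z < i)%N -> z < x.
Proof.
move=> xL [ei|ci] zi; first by rewrite ei in zi.
have h1 : (r z <= i.-1 <= n)%N.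
  rewrite -ltnS prednK ?zi /=; last by apply: leq_ltn_trans zi.
  by apply: leq_trans (leq_pred _) _; move: xL; rewrite inE => /eqP <-; apply: r_le.
have [w _ [rw zw]] := go_up rk (inT z) h1.
apply: le_lt_trans zw _; apply: ci; first by rewrite inE rw.
by rewrite prednK //; apply: leq_ltn_trans zi.
Qed.

Lemma card3P (T : finType) (A : {set T}) : #|A| = 3%N ->
  exists a b c, [/\ a != b, a != c, b != c & A = [set a; b; c]].
Proof.
move=> cA; have [a aA] : exists a, a \in A by apply/card_gt0P; rewrite cA.
have := cardsD1 a A; rewrite aA cA add1n => /eqP; rewrite eqSS => /eqP/esym/eqP/cards2P[b [c [bc e]]].
have bA : b \in A :\ a by rewrite e !inE eqxx.
have cA' : c \in A :\ a by rewrite e !inE eqxx orbT.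
exists a, b, c; split => //.
- by move: bA; rewrite !inE eq_sym => /andP[].
- by move: cA'; rewrite !inE eq_sym => /andP[].
- by rewrite -(setD1K aA) e setUA.
Qed.

Lemma RC i : #|L i| = 3%N -> (i = 0%N \/ comp i.-1) -> (i = n \/ comp i) -> False.
Proof.
move=> /card3P[a [b [c [ab ac bc eL]]]] hb ha.
have aL : a \in L i by rewrite eL !inE eqxx.
have bL : b \in L i by rewrite eL !inE eqxx orbT.
have cL : c \in L i by rewrite eL !inE eqxx !orbT.
have rLi x : x \in L i -> r x = i by rewrite inE => /eqP.
pose Q := [set~ c].
have QL x : x \in Q -> (x \in L i) = (x == a) || (x == b).
  by rewrite /Q eL !inE => /negbTE->; rewrite orbF.
pose sw (phi : P -> P) x := if x == a then b else if x == b then a else phi x.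
have swa phi : sw phi a = a -> False by rewrite /sw eqxx => /eqP; rewrite eq_sym (negbTE ab).
have swQ phi x : (forall y, r (phi y) = r y) -> x \in Q -> sw phi x \in Q.
  move=> rphi xQ; rewrite /sw; case: eqP => [_|/eqP xa]; first by rewrite /Q !inE.
  case: eqP => [_|/eqP xb]; first by rewrite /Q !inE.
  have : x \notin L i by rewrite QL // (negbTE xa) (negbTE xb).
  rewrite /Q !inE -rphi => nx; apply: contraNneq nx => ->; by rewrite -(rLi c cL).
have swNL phi x : (forall y, r (phi y) = r y) -> x \in Q -> x \notin L i -> sw phi x = phi x /\ phi x \notin L i.
  move=> rphi xQ xL; have xL' := xL; rewrite QL // negb_or in xL; case/andP: xL => xa xb.
  split; first by rewrite /sw (negbTE xa) (negbTE xb).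
  by move: xL'; rewrite !inE rphi.
have swab phi : sw phi a = b /\ sw phi b = a.
  by rewrite /sw eqxx eq_sym (negbTE ab) eqxx.
have swL phi x : x \in Q -> x \in L i -> sw phi x \in L i.
  move=> xQ; rewrite QL // => /orP[]/eqP->; rewrite ?(proj1 (swab phi)) ?(proj2 (swab phi)); by [].
have swmono phi : (forall y, r (phi y) = r y) -> (forall x y, x <= y -> phi x <= phi y) ->
    forall x y, x \in Q -> y \in Q -> x <= y -> sw phi x <= sw phi y.
  move=> rphi pm x y xQ yQ xy.
  case: (boolP (x \in L i)) => xL; case: (boolP (y \in L i)) => yL.
  - by rewrite (eq_r_le _ xy) ?lexx // (rLi _ xL) (rLi _ yL).
  - have [-> pyL] := swNL phi y rphi yQ yL; apply: ltW; apply: (above (swL phi x xQ xL)) => //.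
    rewrite rphi -(rLi _ xL); apply: lt_r; rewrite lt_neqAle xy andbT.
    by apply: contraNneq yL => <-.
  - have [-> pxL] := swNL phi x rphi xQ xL; apply: ltW; apply: (below (swL phi y yQ yL)) => //.
    rewrite rphi -(rLi _ yL); apply: lt_r; rewrite lt_neqAle xy andbT.
    by apply: contraNneq xL => ->.
  - have [-> _] := swNL phi x rphi xQ xL; have [-> _] := swNL phi y rphi yQ yL; exact: pm.
have swK (phi psi : P -> P) : (forall y, r (phi y) = r y) -> (forall y, r (psi y) = r y) -> cancel phi psi ->
    {in Q, cancel (sw phi) (sw psi)}.
  move=> rphi rpsi K x xQ; case: (boolP (x \in L i)) => xL.
    by move: (xL); rewrite QL // => /orP[]/eqP->; rewrite ?(proj1 (swab phi)) ?(proj2 (swab phi)); rewrite ?(proj1 (swab psi)) ?(proj2 (swab psi)).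
  have [-> pxL] := swNL phi x rphi xQ xL.
  have pxQ : phi x \in Q by rewrite /Q !inE; apply: contraNneq pxL => ->.
  by have [-> _] := swNL psi (phi x) rpsi pxQ pxL; rewrite K.
apply: (minQ (Q := Q)).
- exists (fun x => if x == c then a else x); split.
  + by move=> x; case: eqP => [_|/eqP xc]; rewrite /Q !inE.
  + move=> x y xy; case: eqP => [exc|/eqP xc]; case: eqP => [eyc|/eqP yc].
    * exact: lexx.
    * apply: ltW; apply: (above aL ha); rewrite -(rLi _ cL) -exc; apply: lt_r.
      by rewrite lt_neqAle xy andbT exc eq_sym.
    * apply: ltW; apply: (below aL hb); rewrite -(rLi _ cL) -eyc; apply: lt_r.
      by rewrite lt_neqAle xy andbT eyc.
    * exact: xy.
  + by move=> x; rewrite /Q !inE => /negbTE ->.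
- by rewrite properT; apply/eqP => /setP/(_ c); rewrite /Q !inE eqxx.
- exists (sw g), (sw h); split.
  + by split => x xQ; apply: swQ => // y; rewrite ?rg ?rh.
  + by split; apply: swK => // y; rewrite ?rg ?rh.
  + by apply: swmono => // y; rewrite rg.
  + by apply: swmono => // y; rewrite rh.
  + move=> x xQ; case: (boolP (x \in L i)) => xL.
      move: (xL); rewrite QL // => /orP[]/eqP->; rewrite ?(proj1 (swab g)) ?(proj2 (swab g)); by rewrite // eq_sym.
    by have [-> _] := swNL g x rg xQ xL; apply: gfix.
Qed.

Lemma up_sub (a b : P -> P) x : cancel a b -> (forall y, r (a y) = r y) -> (forall u v, u < v -> a u < a v) ->
  (#|up x| <= #|up (a x)|)%N.
Proof.
move=> K ra alt; rewrite -(card_imset _ (can_inj K)); apply: subset_leq_card.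
by apply/subsetP=> z /imsetP[y yu ->]; move: yu; rewrite !inE !ra => /andP[-> /alt ->].
Qed.

Lemma dn_sub (a b : P -> P) x : cancel a b -> (forall y, r (a y) = r y) -> (forall u v, u < v -> a u < a v) ->
  (#|dn x| <= #|dn (a x)|)%N.
Proof.
move=> K ra alt; rewrite -(card_imset _ (can_inj K)); apply: subset_leq_card.
by apply/subsetP=> z /imsetP[y yu ->]; move: yu; rewrite !inE !ra => /andP[-> /alt ->].
Qed.

Lemma up_g x : #|up (g x)| = #|up x|.
Proof.
apply/eqP; rewrite eqn_leq (up_sub _ gK rg g_lt) andbT.
by have := up_sub (g x) hK rh h_lt; rewrite gK.
Qed.

Lemma dn_g x : #|dn (g x)| = #|dn x|.
Proof.
apply/eqP; rewrite eqn_leq (dn_sub _ gK rg g_lt) andbT.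
by have := dn_sub (g x) hK rh h_lt; rewrite gK.
Qed.

Lemma up_const i x y : x \in L i -> y \in L i -> #|up y| = #|up x|.
Proof. by move=> xL yL; case/or3P: (L_trans xL yL) => /eqP->; rewrite ?up_g. Qed.

Lemma dn_const i x y : x \in L i -> y \in L i -> #|dn y| = #|dn x|.
Proof. by move=> xL yL; case/or3P: (L_trans xL yL) => /eqP->; rewrite ?dn_g. Qed.

Lemma upE i x : x \in L i -> up x = [set y in L i.+1 | x < y].
Proof. by rewrite inE => /eqP rx; apply/setP=> y; rewrite !inE rx. Qed.

Lemma dnE i y : y \in L i.+1 -> dn y = [set x in L i | x < y].
Proof. by rewrite inE => /eqP ry; apply/setP=> x; rewrite !inE ry eqSS. Qed.

Lemma double_count i : (\sum_(x in L i) #|up x| = \sum_(y in L i.+1) #|dn y|)%N.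
Proof.
rewrite (eq_bigr (fun x => \sum_(y in L i.+1) nat_of_bool (x < y)%O))%N; last first.
  by move=> x xL; rewrite (upE xL) card_sep.
rewrite [RHS](eq_bigr (fun y => \sum_(x in L i) nat_of_bool (x < y)%O))%N; last first.
  by move=> y yL; rewrite (dnE yL) card_sep.
exact: exchange_big.
Qed.

Definition crownlink i := [/\ #|L i| = 3%N, #|L i.+1| = 3%N,
  (forall x, x \in L i -> #|up x| = 2%N) & (forall y, y \in L i.+1 -> #|dn y| = 2%N)].

Lemma link i : (i < n)%N -> comp i \/ crownlink i.
Proof.
move=> iN.
have [x0 x0L] := L_ne (ltnW iN); have [y0 y0L] := L_ne iN.
have up1 x : x \in L i -> (1 <= #|up x|)%N.
  move=> xL; move: (xL); rewrite inE => /eqP rx.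
  have h1 : (r x <= i.+1 <= n)%N by rewrite rx leqnSn iN.
  have [z _ [rz xz]] := go_up rk (inT x) h1.
  apply/card_gt0P; exists z; rewrite inE rz rx eqxx /=.
  by rewrite lt_neqAle xz andbT; apply/eqP=> exz; move: rz; rewrite -exz rx; lia.
have dn1 y : y \in L i.+1 -> (1 <= #|dn y|)%N.
  move=> yL; move: (yL); rewrite inE => /eqP ry.
  have h1 : (i <= r y)%N by rewrite ry.
  have [z _ [rz zy]] := go_down rk (inT y) h1.
  apply/card_gt0P; exists z; rewrite inE rz ry eqxx /=.
  by rewrite lt_neqAle zy andbT; apply/eqP=> ezy; move: rz; rewrite ezy ry; lia.
have du2 : (2 <= #|up x0|)%N.
  rewrite ltnNge; apply/negP=> le1; apply: (RU iN) => x xL.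
  by rewrite (up_const x0L xL); apply/eqP; rewrite eqn_leq le1 up1.
have dd2 : (2 <= #|dn y0|)%N.
  rewrite ltnNge; apply/negP=> le1; apply: (RD (i := i.+1)) => [|y yL]; first by rewrite iN.
  by rewrite (dn_const y0L yL); apply/eqP; rewrite eqn_leq le1 dn1.
have duq : (#|up x0| <= #|L i.+1|)%N.
  by rewrite (upE x0L); apply: subset_leq_card; apply/subsetP=> y; rewrite inE => /andP[].
have ddp : (#|dn y0| <= #|L i|)%N.
  by rewrite (dnE y0L); apply: subset_leq_card; apply/subsetP=> y; rewrite inE => /andP[].
have dc := double_count i.
rewrite (eq_bigr (fun _ => #|up x0|)) in dc; last by move=> x xL; rewrite (up_const x0L xL).
rewrite [RHS](eq_bigr (fun _ => #|dn y0|)) in dc; last by move=> y yL; rewrite (dn_const y0L yL).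
rewrite !sum_nat_const in dc.
have p2 := L_ge2 (ltnW iN); have q2 := L_ge2 iN; have p3 := L_card i; have q3 := L_card i.+1.
have [equ|[p3' [q3' [du' dd']]]] : #|up x0| = #|L i.+1| \/
    (#|L i| = 3%N /\ #|L i.+1| = 3%N /\ #|up x0| = 2%N /\ #|dn y0| = 2%N).
  by move: dc; set p := #|L i|; set q := #|L i.+1|; set du := #|up x0|; set dd := #|dn y0|; nia.
- left=> x y xL yL.
  have : up x = L i.+1.
    apply/eqP; rewrite eqEcard (up_const x0L xL) equ leqnn andbT (upE xL).
    by apply/subsetP=> z; rewrite inE => /andP[].
  by move=> ux; move: yL; rewrite -ux inE => /andP[].
- right; split => //.
    by move=> x xL; rewrite (up_const x0L xL).
  by move=> y yL; rewrite (dn_const y0L yL).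
Qed.


Lemma crown_iso i : (i < n)%N -> crownlink i -> exists f : 'I_6 -> P,
  [/\ injective f, f @: [set: 'I_6] = L i :|: L i.+1 & forall a b, (f a < f b) = crown6_lt a b].
Proof.
move=> iN [/card3P[x0 [x1 [x2 [x01 x02 x12 eL]]]] cL1 cup cdn].
pose alpha x := odflt x [pick y in L i.+1 | ~~ (x < y)].
have rL x j : x \in L j -> r x = j by rewrite inE => /eqP.
have ll u v j : u \in L j -> v \in L j -> (u < v) = false.
  move=> uL vL; apply/negP=> /lt_r; by rewrite (rL _ _ uL) (rL _ _ vL) ltnn.
have hl u v : u \in L i.+1 -> v \in L i -> (u < v) = false.
  move=> uL vL; apply/negP=> /lt_r; rewrite (rL _ _ uL) (rL _ _ vL); lia.
have al x : x \in L i -> alpha x \in L i.+1 /\ ~~ (x < alpha x).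
  move=> xL; have : (0 < #|L i.+1 :\: up x|)%N.
    rewrite cardsD; have := cup x xL; have := subset_leq_card (subsetIl (L i.+1) (up x)).
    rewrite cL1; have : (#|L i.+1 :&: up x| <= #|up x|)%N by apply: subset_leq_card; apply: subsetIr.
    lia.
  case/card_gt0P=> y; rewrite in_setD => /andP[nup yL].
  have nxy : ~~ (x < y) by move: nup; rewrite (upE xL) inE yL.
  by rewrite /alpha; case: pickP => [z /andP[zL nz] //|/(_ y)]; rewrite yL nxy.
have upe x : x \in L i -> up x = L i.+1 :\ alpha x.
  move=> xL; have [aL nxa] := al x xL.
  have cD : #|L i.+1 :\ alpha x| = 2%N.
    by have := cardsD1 (alpha x) (L i.+1); rewrite aL cL1 /= add1n => -[<-].
  apply/eqP; rewrite eqEcard cD cup // leqnn andbT.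
  apply/subsetP=> y; rewrite (upE xL) !inE => /andP[yL xy]; rewrite yL andbT.
  by apply: contraTneq xy => ->.
have lh x y : x \in L i -> y \in L i.+1 -> (x < y) = (y != alpha x).
  move=> xL yL; have := upe x xL; move/setP/(_ y); rewrite (upE xL); move: yL; rewrite !inE => yL.
  by rewrite yL andbT /= => <-.
have ainj x x' : x \in L i -> x' \in L i -> alpha x = alpha x' -> x = x'.
  move=> xL xL' e; apply/eqP; apply: contraT => nxx.
  have [aL _] := al x xL.
  have : dn (alpha x) \subset L i :\ x :\ x'.
    apply/subsetP=> z; rewrite (dnE aL) in_set => /andP[zL zlt]; rewrite !in_setD1 zL andbT.
    rewrite (lh _ _ zL aL) in zlt; apply/andP; split.
      by apply: contraNneq zlt => ->; rewrite e eqxx.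
    by apply: contraNneq zlt => ->; rewrite eqxx.
  move/subset_leq_card; rewrite (cdn _ aL).
  have := cardsD1 x' (L i :\ x); have := cardsD1 x (L i); rewrite xL in_setD1 xL' eq_sym nxx /=.
  move=> e1 e2 c; move: (L_card i); rewrite e1 e2; lia.
have x0L : x0 \in L i by rewrite eL !inE eqxx.
have x1L : x1 \in L i by rewrite eL !inE eqxx orbT.
have x2L : x2 \in L i by rewrite eL !inE eqxx !orbT.
have a0L := (al _ x0L).1; have a1L := (al _ x1L).1; have a2L := (al _ x2L).1.
have ane u v : u \in L i -> v \in L i -> (alpha u != alpha v) = (u != v).
  move=> uL vL; apply/idP/idP; first by apply: contra_neq => ->.
  by apply: contra_neq; apply: ainj.
pose f (a : 'I_6) := nth x0 [:: x0; x1; x2; alpha x2; alpha x0; alpha x1] a.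
have fo a b : (f a < f b) = crown6_lt a b.
  move: a b; do 2 apply: all6; rewrite /f /=;
  rewrite ?(ll _ _ i x0L x0L) ?(ll _ _ i x0L x1L) ?(ll _ _ i x0L x2L) ?(ll _ _ i x1L x0L) ?(ll _ _ i x1L x1L) ?(ll _ _ i x1L x2L)
    ?(ll _ _ i x2L x0L) ?(ll _ _ i x2L x1L) ?(ll _ _ i x2L x2L) //;
  rewrite ?(ll _ _ i.+1 a0L a0L) ?(ll _ _ i.+1 a0L a1L) ?(ll _ _ i.+1 a0L a2L) ?(ll _ _ i.+1 a1L a0L) ?(ll _ _ i.+1 a1L a1L) ?(ll _ _ i.+1 a1L a2L)
    ?(ll _ _ i.+1 a2L a0L) ?(ll _ _ i.+1 a2L a1L) ?(ll _ _ i.+1 a2L a2L) //;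
  rewrite ?(hl _ _ a0L x0L) ?(hl _ _ a0L x1L) ?(hl _ _ a0L x2L) ?(hl _ _ a1L x0L) ?(hl _ _ a1L x1L) ?(hl _ _ a1L x2L)
    ?(hl _ _ a2L x0L) ?(hl _ _ a2L x1L) ?(hl _ _ a2L x2L) //;
  rewrite ?(lh _ _ x0L a0L) ?(lh _ _ x0L a1L) ?(lh _ _ x0L a2L) ?(lh _ _ x1L a0L) ?(lh _ _ x1L a1L) ?(lh _ _ x1L a2L)
    ?(lh _ _ x2L a0L) ?(lh _ _ x2L a1L) ?(lh _ _ x2L a2L) ?eqxx //;
  rewrite ?ane // ?eqxx //; by rewrite ?x01 ?x02 ?x12 // eq_sym ?x01 ?x02 ?x12.
have finj : injective f.
  move=> a b fab; apply/eqP; apply: contraT => nab.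
  have [c] := cr_sep nab; by rewrite -!fo fab !eqxx.
exists f; split => //.
apply/eqP; rewrite eqEcard card_imset // cardsT card_ord.
apply/andP; split.
  apply/subsetP=> z /imsetP[a _ ->]; move: a; apply: all6; rewrite /f /= in_setU;
  by rewrite ?x0L ?x1L ?x2L ?a0L ?a1L ?a2L ?orbT.
apply: leq_trans (leq_card_setU _ _) _; have := L_card i; have := L_card i.+1; lia.
Qed.

Lemma card_le_range (D : {set P}) s t : (forall x y, x \in D -> y \in D -> x >=< y) ->
  (forall x, x \in D -> (s <= r x <= t)%N) -> (#|D| <= (t - s).+1)%N.
Proof.
move=> cmp hr.
pose v x : 'I_(t - s).+1 := inord (r x - s).
have vinj : {in D &, injective v}.
  move=> x y xD yD; rewrite /v => /(congr1 val) /=.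
  have := hr x xD; have := hr y yD => /andP[sy yt] /andP[sx xt].
  rewrite !inordK; try (rewrite ltnS; lia).
  move=> e; have rxy : r x = r y by lia.
  by case/orP: (cmp x y xD yD) => /(eq_r_le _) ->.
by rewrite -(card_in_imset vinj) -[X in (_ <= X)%N](card_ord (t - s).+1) max_card.
Qed.

Lemma card_ge_range (D : {set P}) s t : (s <= t)%N ->
  (forall j, (s <= j <= t)%N -> exists2 x, x \in D & r x = j) -> ((t - s).+1 <= #|D|)%N.
Proof.
move=> st hj.
have h0 : (s <= s <= t)%N by rewrite leqnn st.
have [x0 _ _] := hj s h0.
pose w (a : 'I_(t - s).+1) := odflt x0 [pick x in D | r x == s + a].
have wP a : w a \in D /\ r (w a) = s + a.
  have ha : (s <= s + a <= t)%N by have := ltn_ord a; lia.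
  have [x xD rx] := hj _ ha.
  rewrite /w; case: pickP => [z /andP[zD /eqP rz] //|/(_ x)]; by rewrite xD rx eqxx.
have winj : injective w.
  move=> a b e; apply: ord_inj; have := (wP a).2; have := (wP b).2; rewrite e; lia.
have := card_imset [set: 'I_(t - s).+1] winj; rewrite cardsT card_ord => <-.
apply: subset_leq_card; apply/subsetP=> z /imsetP[a _ ->].
exact: (wP a).1.
Qed.

Lemma Lin x i : (x \in L i) = (r x == i).
Proof. by rewrite inE. Qed.

Lemma levelIn_mem (S : {set P}) x i j : (x \in levelIn S i j) = (x \in S) && (i <= rankIn S x <= j)%N.
Proof. by rewrite inE. Qed.

Lemma chainT (B D : {set P}) : chainIn B D -> chainIn [set: P] D.
Proof. move=> cD; apply: chainP; [exact: subsetT | move=> x y; exact: chain_cmp cD]. Qed.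

Lemma le_r x y : x <= y -> (r x <= r y)%N.
Proof. by rewrite le_eqVlt => /orP[/eqP->//|/lt_r/ltnW]. Qed.

Section Interval.
Variables s e : nat.
Hypothesis se : (s <= e)%N.
Hypothesis en : (e <= n)%N.
Definition B := [set x : P | s <= r x <= e]%N.

Lemma rankB p : p \in B -> rankIn B p = (r p - s)%N.
Proof.
move=> pB; have /andP[sp pe] : (s <= r p <= e)%N by move: pB; rewrite inE.
apply/eqP; rewrite eqn_leq; apply/andP; split.
  have [C [cC pC Cp cardC]] := rank_wit pB.
  have := @card_le_range C s (r p) (fun x y => chain_cmp cC).
  rewrite cardC ltnS; apply => x xC; rewrite le_r ?Cp // andbT.
  by move: (subsetP (chain_sub cC) x xC); rewrite inE => /andP[].
have [M [cM sM hM]] := chain_all rk (chain1 (inT p)).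
have pM : p \in M by apply: (subsetP sM); rewrite in_set1.
pose D := [set x in M | s <= r x <= r p]%N.
have cD : chainIn B D.
  apply: chainP.
    apply/subsetP=> x; rewrite !inE => /andP[_ /andP[-> xp]] /=; exact: leq_trans xp pe.
  by move=> x y; rewrite !inE => /andP[xM _] /andP[yM _]; apply: (chain_cmp cM).
have pD : p \in D by rewrite inE pM sp leqnn.
have Dp x : x \in D -> x <= p.
  by rewrite inE => /andP[xM /andP[_ xp]]; apply: (le_rank_chain cM).
have := rank_ge cD pD Dp; apply: leq_trans.
have : ((r p - s).+1 <= #|D|)%N.
  apply: card_ge_range => // j /andP[sj jp].
  have [x xM rx] := hM j (leq_trans jp (r_le p)).
  by exists x; rewrite // inE xM rx sj jp.
by case: #|D| => //= k; rewrite ltnS.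
Qed.

Lemma rankedB : rankedIn B (e - s).
Proof.
move=> M' /andP[cM' /forallP mx].
apply/eqP; rewrite eqn_leq; apply/andP; split.
  apply: card_le_range => [x y|x xM]; first exact: chain_cmp cM'.
  by move: (subsetP (chain_sub cM') x xM); rewrite inE.
apply: card_ge_range => // j /andP[sj je].
case: (boolP [exists x in M', r x == j]) => [/existsP[x /andP[xM /eqP rx]]|nex]; first by exists x.
have [M [cM sM hM]] := chain_all rk (chainT cM').
have [z zM rz] := hM j (leq_trans je en).
have zB : z \in B by rewrite inE rz sj je.
have cz : chainIn B (z |: M').
  apply: chainU1 => // x xM'; apply: (chain_cmp cM) => //; exact: (subsetP sM).
have := mx (z |: M'); rewrite cz subsetUr /= => /eqP e'.
have : z \in M' by rewrite -e' setU11.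
move=> zM'; move/existsP: nex; case; exists z; by rewrite zM' rz eqxx.
Qed.

Lemma levelB j : (s + j.+1 <= e)%N -> levelIn B j j.+1 = L (s + j) :|: L (s + j).+1.
Proof.
move=> hj; apply/setP=> x; rewrite levelIn_mem in_setU !Lin.
apply/idP/idP.
  case/and3P=> xB a b; move: a b; rewrite rankB //; move: xB; rewrite inE => /andP[sx xe] a b.
  apply/orP; lia.
have xB : (s <= r x <= e)%N -> x \in B by rewrite inE.
case/orP=> /eqP rx; (have xB' : x \in B by apply: xB; rewrite rx; apply/andP; split; lia);
  apply/and3P; split; rewrite // rankB // rx; lia.
Qed.

End Interval.

Definition compb j := [forall x, forall y, ((x \in L j) && (y \in L j.+1)) ==> (x < y)].

Lemma compP j : reflect (comp j) (compb j).
Proof.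
apply: (iffP forallP) => [H x y xL yL|H x]; first by move/forallP: (H x) => /(_ y); rewrite xL yL.
by apply/forallP=> y; apply/implyP=> /andP[xL yL]; apply: H.
Qed.

Definition cnt j := #|[set t : 'I_n | compb t && (t < j)%N]|.

Lemma cnt_mono j j' : (j <= j')%N -> (cnt j <= cnt j')%N.
Proof.
move=> jj; apply: subset_leq_card; apply/subsetP=> t; rewrite !inE => /andP[-> tj] /=.
exact: leq_trans tj jj.
Qed.

Lemma cnt0 : cnt 0 = 0%N.
Proof. by apply: eq_card0 => t; rewrite !inE andbF. Qed.

Lemma cntS j (jn : (j < n)%N) : cnt j.+1 = (cnt j + compb j)%N.
Proof.
rewrite /cnt; case: (boolP (compb j)) => cj.
  have -> : [set t : 'I_n | compb t && (t < j.+1)%N] = Ordinal jn |: [set t : 'I_n | compb t && (t < j)%N].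
    apply/setP=> t; rewrite !inE ltnS leq_eqVlt; case: (eqVneq t (Ordinal jn)) => [->|ne] /=.
      by rewrite cj eqxx.
    have -> : (nat_of_ord t == j) = false by apply/negbTE; apply: contra ne => /eqP e; apply/eqP/ord_inj.
    by [].
  by rewrite cardsU1 !inE ltnn andbF addn1.
rewrite addn0; apply: eq_card => t; rewrite !inE ltnS leq_eqVlt.
case: (eqVneq (nat_of_ord t) j) => [e|ne] /=; last by [].
have -> : t = Ordinal jn by apply: ord_inj.
by rewrite (negbTE cj) ltnn.
Qed.

Lemma cnt_gap j j' : (cnt j < cnt j')%N -> exists t : 'I_n, [/\ compb t, (j <= t)%N & (t < j')%N].
Proof.
move=> lt.
have : ~~ ([set t : 'I_n | compb t && (t < j')%N] \subset [set t : 'I_n | compb t && (t < j)%N]).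
  by apply/negP=> /subset_leq_card; rewrite leqNgt lt.
case/subsetPn=> t; rewrite !inE => /andP[ct tj'] /nandP[/negP//|]; rewrite -leqNgt => jt.
by exists t.
Qed.

Lemma ord_sum x y : (cnt (r x) < cnt (r y))%N -> x < y.
Proof.
case/cnt_gap=> t [/compP ct xt ty].
have h1 : (r x <= t <= n)%N by rewrite xt ltnW.
have [u _ [ru xu]] := go_up rk (inT x) h1.
have [v _ [rv vy]] := go_down rk (inT y) ty.
apply: le_lt_trans xu _; apply: lt_le_trans _ vy; apply: ct; by rewrite Lin ?ru ?rv.
Qed.

Lemma cnt_ivt b : (b <= cnt n)%N -> exists j, (j <= n)%N /\ cnt j = b.
Proof.
move=> bn; have exP : exists j, (j <= n)%N && (b <= cnt j)%N by exists n; rewrite leqnn bn.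
case: (ex_minnP exP) => j /andP[jn bj] jmin; exists j; split => //.
case: j jn bj jmin => [|j] jn bj jmin; first by move: bj; rewrite cnt0 leqn0 => /eqP ->.
have := jmin j; rewrite (ltnW jn) /= ltnn => H.
have bj' : (cnt j < b)%N by rewrite ltnNge; apply/negP=> /H.
move: bj; rewrite cntS //; move: bj'; case: (compb j) => /=; lia.
Qed.

Lemma block_props b : (b <= cnt n)%N -> exists s e, [/\ (s <= e <= n)%N,
   (forall x, (cnt (r x) == b) = (s <= r x <= e)%N),
   (forall j, (s <= j < e)%N -> ~~ compb j),
   (s = 0%N \/ comp s.-1) & (e = n \/ comp e)].
Proof.
move=> bn; have [j0 [j0n cj0]] := cnt_ivt bn.
have exP : exists j, cnt j == b by exists j0; rewrite cj0.
have exQ : exists j, (j <= n)%N && (cnt j == b) by exists j0; rewrite j0n cj0 eqxx.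
have ubQ : forall j, (j <= n)%N && (cnt j == b) -> (j <= n)%N by move=> j /andP[].
case: (ex_minnP exP) => s /eqP cs smin.
case: (ex_maxnP exQ ubQ) => e /andP[en /eqP ce] emax.
have sj0 : (s <= j0)%N by apply: smin; rewrite cj0.
have se : (s <= e)%N by apply: emax; rewrite (leq_trans sj0 j0n) cs eqxx.
have mid j : (s <= j <= e)%N -> cnt j = b.
  move=> /andP[sj je]; apply/eqP; rewrite eqn_leq.
  by rewrite -{1}ce cnt_mono //= -cs cnt_mono.
exists s, e; split.
- by rewrite se en.
- move=> x; apply/idP/idP => [/eqP cx|/mid ->//].
  by rewrite smin ?cx //= emax // r_le cx eqxx.
- move=> j /andP[sj je]; have jn : (j < n)%N by apply: leq_trans je en.
  have := cntS jn; rewrite (mid j) ?sj ?(ltnW je) // (mid j.+1) ?je ?(leq_trans sj) //.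
  by case: (compb j) => //=; lia.
- case: s cs smin sj0 se mid => [|s] cs smin sj0 se mid; [by left | right].
  apply/compP; have sn : (s < n)%N by apply: leq_trans se en.
  have := cntS sn; rewrite cs.
  have : cnt s != b by apply/negP=> /smin; rewrite ltnn.
  by case: (compb s) => //= ne; rewrite addn0 => e'; rewrite e' eqxx in ne.
- have [->|lt] := eqVneq e n; [by left | right].
  have en' : (e < n)%N by rewrite ltn_neqAle lt en.
  apply/compP; have := cntS en'; rewrite ce.
  have : cnt e.+1 != b by apply/negP=> hh; have := emax e.+1; rewrite en' hh => /(_ isT); rewrite ltnn.
  by case: (compb e) => //= ne; rewrite addn0 => e'; rewrite e' eqxx in ne.
Qed.

Lemma fwd_tower : tower6 P.
Proof.
have cntlt x : (cnt (r x) < (cnt n).+1)%N by rewrite ltnS cnt_mono ?r_le.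
exists (cnt n).+1; split => //.
exists (fun x => Ordinal (cntlt x)); split.
  by move=> x y /= lt; apply: ord_sum.
move=> b; have bn : (b <= cnt n)%N by rewrite -ltnS ltn_ord.
have [s [e [/andP[se en] memb nc hs he]]] := block_props bn.
have eB : [set x | Ordinal (cntlt x) == b] = B s e.
  by apply/setP=> x; rewrite !inE -memb.
rewrite eB; have [es|lse] := eqVneq s e.
  subst e; have eL : B s s = L s.
    by apply/setP=> x; rewrite Lin inE -eqn_leq.
  rewrite eL; have c2 := L_ge2 en; have c3 := L_card s.
  case: (ltngtP #|L s| 3) => [lt|gt|eq3].
  - left; split; first lia.
    move=> x y xL yL nxy; apply/negP; rewrite /Order.comparable.
    move: xL yL; rewrite !Lin => /eqP rx /eqP ry.
    case/orP=> /eq_r_le; rewrite rx ry => /(_ erefl) exy; by rewrite exy eqxx in nxy.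
  - lia.
  - by case: (RC eq3 hs he).
right; exists (e - s)%N; split.
- have : (s < e)%N by rewrite ltn_neqAle lse se.
  lia.
- exact: rankedB.
- move=> i ie.
  have hj : (s + i.+1 <= e)%N by lia.
  rewrite levelB //.
  have sin : (s + i < n)%N by lia.
  have hnc : ~~ compb (s + i) by apply: nc; apply/andP; split; lia.
  case: (link sin) => [/compP cc|cl]; first by rewrite cc in hnc.
  have [f [finj fim fo]] := crown_iso sin cl.
  by exists f; split.
Qed.

End Fwd.

End MD.
Import MD.

Theorem corollary3p6 :
  (forall (d : Order.disp_t) (P : finPOrderType d),
      (0 < #|P|)%N ->
      (exists n : nat, rankedIn [set: P] n) ->
      width_le P 3 ->
      minimal_automorphic P -> tower6 P) /\
  (forall (d : Order.disp_t) (P : finPOrderType d),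
      tower6 P -> automorphic P).
Proof.
split.
- move=> d P _ [n rk] wd [[g [h [[_ _] [gK hK] gm hm gf]]] minQ].
  have inT' (x : P) : x \in [set: P] by rewrite inE.
  apply: (fwd_tower (g := g) (h := h) rk wd) => //.
  + by move=> x; apply: gK.
  + by move=> x; apply: hK.
  + by move=> x y; apply: gm.
  + by move=> x y; apply: hm.
  + by move=> x; apply: gf.
- by move=> d P; apply: tower_auto.
Qed.
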